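(* Let $L=\prod_i L_i$ be a product of fields with an action of a group $G$ by ring automorphisms, such that $G$ acts transitively on the set $\{e_i\}_i$ of principal idempotents of $L$. Let $M$ be a module over the skew group ring $L\rtimes G$ such that the natural map $M\to\prod_i e_i\cdot M$, $m\mapsto(e_i\cdot m)_i$, is an isomorphism and $\dim_{L_i}e_i\cdot M<\infty$ for some $i$. Then $M$ is free of finite rank over $L$.
   Context: The principal idempotents of $L=\prod_iL_i$ are the elements $e_i$ with $1$ in the $i$-th coordinate and $0$ elsewhere; any ring automorphism of $L$ permutes them. *)

(* Defs.v *)
From HB Require Import structures.
From mathcomp Require Import all_boot all_order all_algebra.
Set Implicit Arguments. Unset Strict Implicit. Unset Printing Implicit Defensive.
Import GRing.Theory.
Local Open Scope ring_scope.

Record group_laws (G : Type) (mul : G -> G -> G) (one : G) (inv : G -> G) : Prop := {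
  gmulA : forall x y z, mul x (mul y z) = mul (mul x y) z;
  gmul1 : forall x, mul one x = x;
  gmulV : forall x, mul (inv x) x = one }.

Definition is_product_of_fields (L : comPzRingType) (I : Type) (F : I -> fieldType)
  (pi : forall i, {rmorphism L -> F i}) : Prop :=
  bijective (fun x : L => (fun i => pi i x) : forall i, F i).

Definition prin_idem (L : comPzRingType) (I : Type) (F : I -> fieldType)
  (pi : forall i, {rmorphism L -> F i}) (i : I) (e : L) : Prop :=
  pi i e = 1 /\ forall j, j <> i -> pi j e = 0.

Definition ring_aut_action (G : Type) (mul : G -> G -> G) (one : G)
  (L : comPzRingType) (sigma : G -> L -> L) : Prop :=
  [/\ forall g x y, sigma g (x + y) = sigma g x + sigma g y,
      forall g x y, sigma g (x * y) = sigma g x * sigma g y,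
      forall g, sigma g 1 = 1,
      forall x, sigma one x = x &
      forall g h x, sigma (mul g h) x = sigma g (sigma h x)].

(* A module over the skew group ring L # G: an L-module M with an action rho
   of G by additive maps which are sigma-semilinear: g(l m) = sigma_g(l) g(m). *)
Definition skew_module (G : Type) (mul : G -> G -> G) (one : G)
  (L : comPzRingType) (sigma : G -> L -> L) (M : lmodType L) (rho : G -> M -> M) : Prop :=
  [/\ forall g m m', rho g (m + m') = rho g m + rho g m',
      forall g l m, rho g (l *: m) = sigma g l *: rho g m,
      forall m, rho one m = m &
      forall g h m, rho (mul g h) m = rho g (rho h m)].

Definition natural_map_iso (L : comPzRingType) (I : Type) (e : I -> L) (M : lmodType L) : Prop :=
  (forall m m' : M, (forall i, e i *: m = e i *: m') -> m = m') /\
  (forall x : I -> M, (forall i, exists y : M, x i = e i *: y) ->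
     exists m : M, forall i, e i *: m = x i).

(* e_i M is finite dimensional over L_i = F i.  Since L acts on e_i M through
   pi i : L ->> F i, the F i-span of a family in e_i M equals its L-span. *)
Definition fin_dim_component (L : comPzRingType) (I : Type) (e : I -> L) (M : lmodType L)
  (i : I) : Prop :=
  exists n (v : 'I_n -> M), (forall k, exists y : M, v k = e i *: y) /\
    forall x : M, (exists y : M, x = e i *: y) ->
      exists c : 'I_n -> L, x = \sum_(k < n) c k *: v k.

Definition free_fin_rank (L : comPzRingType) (M : lmodType L) : Prop :=
  exists n (b : 'I_n -> M), forall m : M,
    exists! c : 'I_n -> L, m = \sum_(k < n) c k *: b k.

(* Main.v *)
Require Import Defs.
From mathcomp Require Import all_boot all_order all_algebra.
From Stdlib Require Import Classical ClassicalEpsilon FunctionalExtensionality.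
Set Implicit Arguments. Unset Strict Implicit. Unset Printing Implicit Defensive.
Import GRing.Theory.
Local Open Scope ring_scope.

Lemma choice_fun (A : Type) (B : A -> Type) (P : forall a, B a -> Prop) :
  (forall a, exists b, P a b) -> exists f : forall a, B a, forall a, P a (f a).
Proof.
move=> H; exists (fun a => proj1_sig (constructive_indefinite_description _ (H a))).
by move=> a; exact: (proj2_sig (constructive_indefinite_description _ (H a))).
Qed.

Lemma pi_inj (L : comPzRingType) (I : Type) (F : I -> fieldType)
  (pi : forall i, {rmorphism L -> F i}) : is_product_of_fields pi ->
  forall x y, (forall j, pi j x = pi j y) -> x = y.
Proof.
move=> Hb x y H; apply: (bij_inj Hb) => /=.
exact: functional_extensionality_dep.
Qed.

Lemma pi_surj (L : comPzRingType) (I : Type) (F : I -> fieldType)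
  (pi : forall i, {rmorphism L -> F i}) : is_product_of_fields pi ->
  forall f : forall j, F j, exists x, forall j, pi j x = f j.
Proof.
move=> [g fg gf] f; exists (g f) => j.
by have := gf f => /(f_equal (fun h => h j)).
Qed.

Lemma e_mul_eq (L : comPzRingType) (I : Type) (F : I -> fieldType)
  (pi : forall i, {rmorphism L -> F i}) (e : I -> L) : is_product_of_fields pi ->
  (forall i, prin_idem pi i (e i)) ->
  forall i a b, pi i a = pi i b -> e i * a = e i * b.
Proof.
move=> Hb He i a b Hab; apply: (pi_inj Hb) => j; rewrite !rmorphM.
case: (classic (j = i)) => [->|ne]; first by rewrite Hab.
by rewrite (He i).2 // !mul0r.
Qed.

Lemma pi_e_mul (L : comPzRingType) (I : Type) (F : I -> fieldType)
  (pi : forall i, {rmorphism L -> F i}) (e : I -> L) :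
  (forall i, prin_idem pi i (e i)) ->
  forall i a, pi i (e i * a) = pi i a.
Proof. by move=> He i a; rewrite rmorphM (He i).1 mul1r. Qed.

Lemma e_idem (L : comPzRingType) (I : Type) (F : I -> fieldType)
  (pi : forall i, {rmorphism L -> F i}) (e : I -> L) : is_product_of_fields pi ->
  (forall i, prin_idem pi i (e i)) -> forall i, e i * e i = e i.
Proof.
move=> Hb He i; rewrite -[RHS]mulr1; apply: (e_mul_eq Hb He).
by rewrite (He i).1 rmorph1.
Qed.

Lemma e_mul0 (L : comPzRingType) (I : Type) (F : I -> fieldType)
  (pi : forall i, {rmorphism L -> F i}) (e : I -> L) :
  (forall i, prin_idem pi i (e i)) ->
  forall i a, e i * a = 0 -> pi i a = 0.
Proof. by move=> He i a H; rewrite -(pi_e_mul He) H rmorph0. Qed.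

Lemma e_inv (L : comPzRingType) (I : Type) (F : I -> fieldType)
  (pi : forall i, {rmorphism L -> F i}) (e : I -> L) : is_product_of_fields pi ->
  (forall i, prin_idem pi i (e i)) ->
  forall i a, pi i a <> 0 -> exists u, e i * (u * a) = e i.
Proof.
move=> Hb He i a Ha.
have [u Hu] := pi_surj Hb (fun j => (pi j a)^-1).
exists u; rewrite -[RHS]mulr1; apply: (e_mul_eq Hb He).
by rewrite rmorphM Hu rmorph1 mulVf //; apply/eqP.
Qed.

Definition spans (L : comPzRingType) (I : Type) (e : I -> L) (M : lmodType L) (i : I)
  n (v : 'I_n -> M) : Prop :=
  (forall k, exists y : M, v k = e i *: y) /\
  (forall x : M, (exists y : M, x = e i *: y) ->
      exists c : 'I_n -> L, x = \sum_(k < n) c k *: v k).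

Definition indep (L : comPzRingType) (I : Type) (F : I -> fieldType)
  (pi : forall i, {rmorphism L -> F i}) (M : lmodType L) (i : I) n (v : 'I_n -> M) : Prop :=
  forall a : 'I_n -> L, \sum_(k < n) a k *: v k = 0 -> forall k, pi i (a k) = 0.

Lemma inE_idem (L : comPzRingType) (I : Type) (F : I -> fieldType)
  (pi : forall i, {rmorphism L -> F i}) (e : I -> L) (M : lmodType L) :
  is_product_of_fields pi -> (forall i, prin_idem pi i (e i)) ->
  forall i (x : M), (exists y, x = e i *: y) -> e i *: x = x.
Proof. by move=> Hb He i x [y ->]; rewrite scalerA (e_idem Hb He). Qed.

Lemma reduce (L : comPzRingType) (I : Type) (F : I -> fieldType)
  (pi : forall i, {rmorphism L -> F i}) (e : I -> L) (M : lmodType L) :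
  is_product_of_fields pi -> (forall i, prin_idem pi i (e i)) ->
  forall i n (v : 'I_n -> M), spans e i v ->
  exists n' (v' : 'I_n' -> M), spans e i v' /\ indep pi i v'.
Proof.
move=> Hb He i n; elim: n => [|n IH] v Hs.
  by exists 0%N, v; split => // a _ [].
case: (classic (indep pi i v)) => Hind; first by exists n.+1, v.
have [a [Ha [k0 Hk0]]] : exists a : 'I_n.+1 -> L,
    \sum_(k < n.+1) a k *: v k = 0 /\ exists k, pi i (a k) <> 0.
  apply: NNPP => H; apply: Hind => a Ha k; apply: NNPP => Hk.
  by apply: H; exists a; split => //; exists k.
have [u Hu] := e_inv Hb He Hk0.
apply: (IH (fun k => v (lift k0 k))); split.
  by move=> k; exact: Hs.1.
have Hv0 : v k0 = - \sum_(k < n) (e i * u * a (lift k0 k)) *: v (lift k0 k).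
  rewrite (bigD1_ord k0) //= in Ha.
  have Ha' : a k0 *: v k0 = - \sum_(k < n) a (lift k0 k) *: v (lift k0 k).
    by apply/eqP; rewrite -addr_eq0 Ha.
  rewrite -(inE_idem Hb He (Hs.1 k0)) -{1}Hu mulrA -scalerA Ha' scalerN scaler_sumr.
  by congr (- _); apply: eq_bigr => k _; rewrite scalerA.
move=> x Hx; have [c Hc] := Hs.2 x Hx.
exists (fun k => c (lift k0 k) - c k0 * (e i * u * a (lift k0 k))).
rewrite Hc (bigD1_ord k0) //= Hv0 scalerN scaler_sumr.
under [in RHS]eq_bigr => k _ do rewrite scalerBl.
rewrite sumrB addrC; congr (_ + _); congr (- _).
by apply: eq_bigr => k _; rewrite scalerA.
Qed.

Lemma mulgV' (G : Type) (mul : G -> G -> G) (one : G) (inv : G -> G) :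
  group_laws mul one inv -> forall g, mul g (inv g) = one.
Proof.
move=> [A l1 lV] g; set y := mul g (inv g).
have yy : mul y y = y.
  by rewrite /y -A (A (inv g)) lV l1.
by rewrite -(l1 y) -(lV y) -A yy.
Qed.

Theorem lemma2p4 (L : comPzRingType) (I : Type) (F : I -> fieldType)
  (pi : forall i, {rmorphism L -> F i})
  (G : Type) (mul : G -> G -> G) (one : G) (inv : G -> G)
  (sigma : G -> L -> L) (e : I -> L) (M : lmodType L) (rho : G -> M -> M) :
  group_laws mul one inv ->
  is_product_of_fields pi ->
  (forall i, prin_idem pi i (e i)) ->
  ring_aut_action mul one sigma ->
  (forall i j, exists g, sigma g (e i) = e j) ->
  skew_module mul one sigma rho ->
  natural_map_iso e M ->
  (exists i, fin_dim_component e M i) ->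
  free_fin_rank M.
Proof.
move=> Hg Hb He [sadd smul s1 sone scomp] Htr [radd rscal rone rcomp]
  [Hinj Hsurj] [i0 [n0 [v0 [Hv1 Hv2]]]].
have [n [v [[Hv Hsp] Hind]]] := reduce Hb He (conj Hv1 Hv2 : spans e i0 v0).
have sil g x : sigma (inv g) (sigma g x) = x.
  by rewrite -scomp (gmulV Hg) sone.
have sir g x : sigma g (sigma (inv g) x) = x.
  by rewrite -scomp (mulgV' Hg) sone.
have ril g x : rho (inv g) (rho g x) = x.
  by rewrite -rcomp (gmulV Hg) rone.
have rir g x : rho g (rho (inv g) x) = x.
  by rewrite -rcomp (mulgV' Hg) rone.
have s0 g : sigma g 0 = 0.
  move: (sadd g 0 0); rewrite addr0 => H; apply: (addrI (sigma g 0)).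
  by rewrite addr0 -H.
have r0 g : rho g 0 = 0.
  move: (radd g 0 0); rewrite addr0 => H; apply: (addrI (rho g 0)).
  by rewrite addr0 -H.
have rsum g (c : 'I_n -> L) (w : 'I_n -> M) :
    rho g (\sum_(k < n) c k *: w k) = \sum_(k < n) sigma g (c k) *: rho g (w k).
  rewrite (big_morph (rho g) (radd g) (r0 g)).
  by apply: eq_bigr => k _; rewrite rscal.
have [gf Hgf] := choice_fun (Htr i0).
pose w j k := rho (gf j) (v k).
have Hw j k : exists y, w j k = e j *: y.
  have [y Hy] := Hv k; exists (rho (gf j) y).
  by rewrite /w Hy rscal Hgf.
have Hwsp j x : (exists y, x = e j *: y) ->
    exists c : 'I_n -> L, x = \sum_(k < n) c k *: w j k.
  move=> [y Hy].
  have [c Hc] : exists c : 'I_n -> L,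
      rho (inv (gf j)) x = \sum_(k < n) c k *: v k.
    apply: Hsp; exists (rho (inv (gf j)) y).
    by rewrite Hy rscal -(Hgf j) sil.
  exists (fun k => sigma (gf j) (c k)).
  by rewrite -(rir (gf j) x) Hc rsum.
have Hwind j (a : 'I_n -> L) : \sum_(k < n) a k *: w j k = 0 -> forall k, pi j (a k) = 0.
  move=> Ha k.
  have H0 : \sum_(k < n) sigma (inv (gf j)) (a k) *: v k = 0.
    have E := rsum (inv (gf j)) a (w j); rewrite Ha r0 in E.
    rewrite [RHS]E.
    by apply: eq_bigr => k' _; rewrite /w ril.
  have Hz : pi i0 (sigma (inv (gf j)) (a k)) = pi i0 0.
    by rewrite rmorph0; exact: Hind H0 k.
  have := e_mul_eq Hb He Hz.
  rewrite mulr0 => /(f_equal (sigma (gf j))).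
  rewrite smul Hgf sir s0 => /(f_equal (pi j)).
  by rewrite (pi_e_mul He) rmorph0.
have [b Hbk] : exists b : 'I_n -> M, forall k j, e j *: b k = w j k.
  apply: (choice_fun (B := fun _ => M) (P := fun k m => forall j, e j *: m = w j k)).
  by move=> k; apply: Hsurj => j; exact: Hw.
have comm j (c : 'I_n -> L) :
    e j *: \sum_(k < n) c k *: b k = \sum_(k < n) c k *: w j k.
  rewrite scaler_sumr; apply: eq_bigr => k _.
  by rewrite scalerA mulrC -scalerA Hbk.
have uniq (c c' : 'I_n -> L) : \sum_(k < n) c k *: b k = \sum_(k < n) c' k *: b k ->
    c = c'.
  move=> H; apply: functional_extensionality => k; apply: (pi_inj Hb) => j.
  have H' : \sum_(k < n) (c k - c' k) *: w j k = 0.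
    under eq_bigr => k' _ do rewrite scalerBl.
    by rewrite sumrB -!comm H subrr.
  by apply/eqP; rewrite -subr_eq0 -rmorphB; apply/eqP; exact: Hwind H' k.
exists n, b => m.
have [cj Hcj] : exists cj : I -> 'I_n -> L,
    forall j, e j *: m = \sum_(k < n) cj j k *: w j k.
  apply: (choice_fun (B := fun _ => 'I_n -> L)
    (P := fun j (c : 'I_n -> L) => e j *: m = \sum_(k < n) c k *: w j k)) => j.
  by apply: Hwsp; exists m.
have [c Hc] : exists c : 'I_n -> L, forall k j, pi j (c k) = pi j (cj j k).
  apply: (choice_fun (B := fun _ => L)
    (P := fun k (x : L) => forall j, pi j x = pi j (cj j k))) => k.
  exact: (pi_surj Hb (fun j => pi j (cj j k))).
have Hm : m = \sum_(k < n) c k *: b k.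
  apply: Hinj => j; rewrite Hcj comm; apply: eq_bigr => k _.
  have [y Hy] := Hw j k.
  rewrite Hy !scalerA [cj j k * _]mulrC [c k * _]mulrC.
  by rewrite (e_mul_eq Hb He (Hc k j)).
exists c; split => // c' Hc'; apply: uniq; by rewrite -Hm -Hc'.
Qed.
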